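(* Let $q$ be a prime power, $l\ge1$, $t=q^l$, $G_4(x)=x^t+x^{t-1}+1$, $G_5(x)=x^{t+1}+x^t+x$, and $L_4^*=\{\alpha\in GF(t^2):\ \alpha\neq0,\ G_4(\alpha)\ne0\}$. Then the $q$-ary Goppa codes $\Gamma_5^{(q-1)}=\Gamma(L_4^*,G_5^{q-1})$ and $\Gamma_4^{*(q-1)}=\Gamma(L_4^*,G_4^{q-1})$ have equal parity-check matrices, i.e., they coincide as codes.
   Context: For a set $L=\{\alpha_1,\dots,\alpha_n\}$ of distinct elements of $GF(t^2)$ and $P\in GF(t^2)[x]$ with $P(\alpha_k)\neq0$ for all $k$, the $q$-ary Goppa code is $\Gamma(L,P)=\{c\in GF(q)^n:\ \sum_k c_k\alpha_k^s/P(\alpha_k)=0 \text{ for } s=0,\dots,\deg P-1\}$. *)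

(* Defs.v *)
From HB Require Import structures.
From mathcomp Require Import all_boot all_order all_algebra all_field.
Set Implicit Arguments. Unset Strict Implicit. Unset Printing Implicit Defensive.
Import GRing.Theory.
Local Open Scope ring_scope.

(* GF(q) is the finite field K, GF(t^2) is the finite field L, and the
   embedding GF(q) \subset GF(t^2) is the field morphism f. *)

Definition goppa (K L : finFieldType) (f : {rmorphism K -> L}) (n : nat)
    (alpha : 'I_n -> L) (P : {poly L}) : {set 'rV[K]_n} :=
  [set c : 'rV[K]_n | [forall s : 'I_(size P).-1,
     \sum_(k < n) f (c 0 k) * alpha k ^+ s / P.[alpha k] == 0]].

Definition G4 (L : finFieldType) (t : nat) : {poly L} := 'X^t + 'X^(t.-1) + 1.
Definition G5 (L : finFieldType) (t : nat) : {poly L} := 'X^(t.+1) + 'X^t + 'X.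

Definition L4star (L : finFieldType) (t : nat) : {set L} :=
  [set a : L | (a != 0) && ((G4 L t).[a] != 0)].

(* Main.v *)
Require Import Defs.
From HB Require Import structures.
From mathcomp Require Import all_boot all_order all_algebra all_field.
From mathcomp Require Import ring zify.
Set Implicit Arguments. Unset Strict Implicit. Unset Printing Implicit Defensive.
Import GRing.Theory.
Local Open Scope ring_scope.

Section Frob.
Variable (R : comNzRingType) (N : nat).
Hypothesis HN : [pchar R].-nat N.

Lemma frobD (x y : R) : (x + y) ^+ N = x ^+ N + y ^+ N.
Proof. exact: exprDn_pchar. Qed.

Lemma frobN (x : R) : (- x) ^+ N = - x ^+ N.
Proof.
apply/eqP; rewrite -subr_eq0 opprK -frobD addNr expr0n.
have : N != 0%N by apply/eqP=> E; move: HN; rewrite E.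
by move/negPf => ->.
Qed.
End Frob.

Section PolyPart.
Variable (L : fieldType) (q t m : nat).
Hypothesis Ht : [pchar L].-nat t.
Hypothesis Htqm : t = (q * m)%N.
Hypothesis Ht1 : (1 <= t)%N.

Let G : {poly L} := 'X^t + 'X^(t.-1) + 1.
Let Htp : [pchar {poly L}].-nat t.
Proof. by rewrite (eq_pnat _ (@pchar_poly L)). Qed.

Definition rootX : {poly L} := (- ('X^(t.-1) + 1)) ^+ m.

Lemma rootX_spec : G %| rootX ^+ q - 'X.
Proof.
set v : {poly L} := 'X^(t.-1 * t).
have Hu : 'X * 'X^(t.-1) = 'X^t :> {poly L}.
  by rewrite -exprS prednK.
have HGt : G ^+ t = v * ('X^t + 1) + 1.
  rewrite /G !(frobD Htp) expr1n -!exprM /v mulrDr mulr1 -exprD.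
  by rewrite -mulSnr prednK.
have E : v + 'X + 1 = G * (('X + 1) * (G ^+ t.-1 - v) + v).
  have -> : G * (('X + 1) * (G ^+ t.-1 - v) + v) =
     ('X + 1) * G ^+ t - ('X + 1) * v * G + v * G.
    have Gt : G ^+ t = G ^+ t.-1 * G by rewrite -exprSr prednK.
    by rewrite Gt; ring.
  rewrite HGt /G -Hu; ring.
have -> : rootX ^+ q - 'X = - (G * (('X + 1) * (G ^+ t.-1 - v) + v)).
  rewrite -E /rootX -exprM mulnC -Htqm (frobN Htp) (frobD Htp) expr1n -exprM.
  rewrite /v; ring.
by rewrite dvdpNr dvdp_mulIl.
Qed.

Lemma sizeG : size G = t.+1.
Proof.
rewrite /G size_polyDl size_polyDl ?size_polyXn ?size_poly1 //.
all: by rewrite prednK.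
Qed.

Lemma G_neq0 : G != 0.
Proof. by rewrite -size_poly_eq0 sizeG. Qed.

Hypothesis Hq : [pchar L].-nat q.
Hypothesis Hq1 : (1 < q)%N.

Let Hqp : [pchar {poly L}].-nat q.
Proof. by rewrite (eq_pnat _ (@pchar_poly L)). Qed.

Lemma decomp e : (e < t * q)%N -> exists P Q : {poly L},
  [/\ (size P <= t)%N, (size Q <= t * q.-1)%N & 'X^e = P ^+ q + Q * G].
Proof.
move=> He.
set a := (e %/ q)%N; set b := (e %% q)%N.
set P0 : {poly L} := 'X^a * rootX ^+ b.
set P := P0 %% G.
have H1 : G %| 'X^e - P0 ^+ q.
  have -> : P0 ^+ q = 'X^(a * q) * (rootX ^+ q) ^+ b.
    by rewrite /P0 exprMn -!exprM [(b * q)%N]mulnC.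
  rewrite {1}(divn_eq e q) exprD -/a -/b -mulrBr; apply: dvdp_mull.
  rewrite subrXX -opprB mulNr dvdpNr; apply: dvdp_mulr.
  exact: rootX_spec.
have H2 : G %| P0 ^+ q - P ^+ q.
  rewrite -(frobN Hqp) -(frobD Hqp).
  have -> : P0 - P = P0 %/ G * G by rewrite {1}(divp_eq P0 G) /P addrK.
  by rewrite -(prednK (ltnW Hq1)) exprS dvdp_mulr // dvdp_mulIr.
have : G %| 'X^e - P ^+ q.
  by have := dvdp_add H1 H2; rewrite addrA subrK.
case/dvdpP=> Q HQ.
exists P, Q; split.
- by have := ltn_modpN0 P0 G_neq0; rewrite sizeG.
- have [->|Q0] := eqVneq Q 0; first by rewrite size_poly0.
  have HP : (size P <= t)%N by have := ltn_modpN0 P0 G_neq0; rewrite sizeG.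
  have HPq : (size (P ^+ q) <= t * q)%N.
    apply: leq_trans (size_poly_exp_leq P q) _.
    have h1 : ((size P).-1 * q <= t.-1 * q)%N by rewrite leq_mul2r -subn1 -[t.-1]subn1 leq_sub2r ?HP ?orbT.
    have h2 : (t * q = t.-1 * q + q)%N by rewrite -mulSnr prednK.
    by rewrite h2 -addn1 leq_add // ltnW.
  have : (size (Q * G)%R <= t * q)%N.
    rewrite -HQ; apply: leq_trans (size_polyD _ _) _.
    by rewrite size_polyN geq_max size_polyXn He.
  rewrite size_mul ?G_neq0 // sizeG addnS /= => HH.
  have h3 : (t * q.-1 = t * q - t)%N by rewrite -subn1 mulnBr muln1.
  by rewrite h3 -(addnK t (size Q)) leq_sub2r.
- by rewrite -HQ addrC subrK.
Qed.

End PolyPart.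
Section Main.
Variables (K L : finFieldType) (f : {rmorphism K -> L}) (q t l : nat).
Hypotheses (HK : #|K| = q) (HL : #|L| = (t * t)%N).
Hypotheses (Hqn : [pchar L].-nat q) (Htn : [pchar L].-nat t).
Hypotheses (Htl : t = (q ^ l)%N) (Hl : (1 <= l)%N) (Hq1 : (1 < q)%N).
Variables (n : nat) (alpha : 'I_n -> L).
Hypotheses (Hnz : forall k, alpha k != 0) (HG : forall k, (G4 L t).[alpha k] != 0).
Variable c : 'rV[K]_n.

Let beta k := f (c 0 k).
Definition Sg (h : L -> L) := \sum_(k < n) beta k * h (alpha k).

Lemma Ht_eq : t = (q * q ^ l.-1)%N.
Proof. by rewrite Htl -expnS prednK. Qed.

Lemma Ht1 : (0 < t)%N.
Proof. by rewrite Htl expn_gt0 ltnW. Qed.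

Lemma Hqt : (q <= t)%N.
Proof. by rewrite Ht_eq leq_pmulr // expn_gt0 ltnW. Qed.

Lemma beta_q k : beta k ^+ q = beta k.
Proof. by rewrite /beta -rmorphXn -HK expf_card. Qed.

Lemma beta_qj j k : beta k ^+ (q ^ j) = beta k.
Proof.
elim: j => [|j IH]; first by rewrite expr1.
by rewrite expnSr exprM IH beta_q.
Qed.

Lemma Sg_frob N h : [pchar L].-nat N -> (forall k, beta k ^+ N = beta k) ->
  Sg h ^+ N = Sg (fun a => h a ^+ N).
Proof.
move=> HN Hb; rewrite /Sg.
rewrite (big_morph (fun x : L => x ^+ N) (id1 := 0) (op1 := +%R) (frobD HN)).
  by apply: eq_bigr => k _; rewrite exprMn Hb.
by rewrite expr0n; case: N HN Hb.
Qed.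

Lemma Sg_ext h h' : (forall a, a != 0 -> (G4 L t).[a] != 0 -> h a = h' a) -> Sg h = Sg h'.
Proof. by move=> H; apply: eq_bigr => k _; rewrite H. Qed.

Lemma Sg_add h h' : Sg (fun a => h a + h' a) = Sg h + Sg h'.
Proof. by rewrite /Sg -big_split; apply: eq_bigr => k _; rewrite mulrDr. Qed.

Lemma Sg_lin (R : {poly L}) D :
  Sg (fun a => R.[a] * D a) = \sum_(i < size R) R`_i * Sg (fun a => a ^+ i * D a).
Proof.
rewrite /Sg.
under eq_bigr do rewrite horner_coef mulr_suml mulr_sumr.
rewrite exchange_big /=; apply: eq_bigr => i _; rewrite mulr_sumr.
by apply: eq_bigr => k _; ring.
Qed.


Local Notation g a := (G4 L t).[a].

Hypothesis H4 : forall s, (s < t * q.-1)%N -> Sg (fun a => a ^+ s / g a ^+ q.-1) = 0.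

Lemma S_poly (R : {poly L}) : (size R <= t * q.-1)%N -> Sg (fun a => R.[a] / g a ^+ q.-1) = 0.
Proof.
move=> HR; rewrite (Sg_lin R (fun a => (g a ^+ q.-1)^-1)).
apply: big1 => i _; rewrite H4 ?mulr0 //.
exact: leq_trans (ltn_ord i) HR.
Qed.

Lemma gq (a : L) : g a ^+ q = g a ^+ q.-1 * g a.
Proof. by rewrite -exprSr prednK // ltnW. Qed.

Lemma gq1 (a : L) : g a ^+ q.-1 = g a ^+ q.-2 * g a.
Proof. by rewrite -exprSr prednK // -ltnS prednK // ltnW. Qed.

Lemma T0 e : (e < t * q)%N -> Sg (fun a => a ^+ e / g a ^+ q) = 0.
Proof.
move=> He.
have [P [Q [HP HQ HX]]] := decomp Htn Ht_eq Ht1 Hqn Hq1 He.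
rewrite (@Sg_ext _ (fun a => (P.[a] / g a) ^+ q + Q.[a] / g a ^+ q.-1)); last first.
  move=> a a0 g0.
  have := congr1 (fun p => p.[a]) HX.
  rewrite hornerXn hornerD hornerM horner_exp -/(G4 L t) => ->.
  rewrite expr_div_n gq.
  move: (P.[a]) (Q.[a]) (g a) g0 => x y z z0.
  by field; rewrite ?z0 expf_neq0.
rewrite Sg_add (S_poly HQ) addr0 -(Sg_frob _ Hqn beta_q).
rewrite (@Sg_ext _ (fun a => (P * (G4 L t) ^+ q.-2).[a] / g a ^+ q.-1)).
  rewrite S_poly; first by rewrite expr0n gtn_eqF // ltnW.
  have sG : size (G4 L t) = t.+1 by rewrite sizeG // Ht1.
  apply: leq_trans (size_polyMleq _ _) _.
  have h := size_poly_exp_leq (G4 L t) q.-2; rewrite sG /= in h.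
  have -> : q.-1 = (q.-2).+1 by rewrite prednK // -ltnS prednK // ltnW.
  rewrite mulnSr -subn1 leq_subLR add1n -addSn [(size P + _)%N]addnC.
  exact: leq_add.
move=> a a0 g0; rewrite hornerM horner_exp gq1.
move: (P.[a]) (g a) g0 => x z z0.
by field; rewrite z0 expf_neq0.
Qed.


Lemma ett (a : L) : a ^+ (t * t) = a.
Proof. by rewrite -HL expf_card. Qed.

Lemma gE (a : L) : g a = a ^+ t + a ^+ t.-1 + 1.
Proof. by rewrite /G4 !hornerE. Qed.

Lemma G5E (a : L) : (G5 L t).[a] = a * g a.
Proof.
rewrite /G5 gE !hornerE !mulrDr mulr1 -exprS exprS.
by rewrite -[in a * a ^+ t.-1]exprS prednK // Ht1.
Qed.

Lemma agt (a : L) : (a * g a) ^+ t = a * g a.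
Proof.
rewrite gE !mulrDr mulr1 -exprS -[in a * a ^+ t.-1]exprS prednK; last exact: Ht1.
rewrite !(frobD Htn) -!exprM ett mulSn exprD ett.
by rewrite exprSr; ring.
Qed.

Lemma T_frob e : Sg (fun a => (a ^+ e / g a ^+ q) ^+ t) = (Sg (fun a => a ^+ e / g a ^+ q)) ^+ t.
Proof. by rewrite (Sg_frob _ Htn) // => k; rewrite Htl beta_qj. Qed.


Lemma F1 (a : L) s d e' : a != 0 -> g a != 0 -> (e' + q = t * s.+1)%N -> q = (s.+1 + d)%N ->
  (a ^+ e' / g a ^+ q) ^+ t = (a ^+ d * g a ^+ q)^-1.
Proof.
move=> a0 g0 He' Hqd.
have hw : a ^+ t * g a ^+ t = a * g a by rewrite -exprMn agt.
have hz : g a ^+ t = a * g a / a ^+ t.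
  by rewrite -hw [a ^+ t * _]mulrC mulfK // expf_neq0.
have hx : a ^+ (e' * t) = a ^+ s.+1 / (a ^+ t) ^+ q.
  apply: (mulIf (expf_neq0 q (expf_neq0 t a0))); rewrite divfK ?expf_neq0 //.
  by rewrite -exprM -exprD (mulnC t q) -mulnDl He' mulnAC exprM ett.
have haq : a ^+ q = a ^+ s.+1 * a ^+ d by rewrite Hqd exprD.
rewrite expr_div_n -exprM exprAC hz hx expr_div_n exprMn haq.
have := expf_neq0 t a0; move: (a ^+ t) => w w0.
move: (a ^+ s.+1) (a ^+ d) (g a ^+ q) (expf_neq0 s.+1 a0) (expf_neq0 d a0) (expf_neq0 q g0).
move=> x y z x0 y0 z0.
by field; rewrite ?x0 ?y0 ?z0 ?a0 ?g0 ?expf_neq0.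
Qed.

Lemma neg_case s : (s < q.-1)%N -> Sg (fun a => a ^+ s / (a * g a) ^+ q.-1) = 0.
Proof.
move=> Hs.
set d := (q.-1 - s)%N; set u := (t - q + s)%N; set e' := (t * s.+1 - q)%N.
have Hqt := Hqt; have Ht1 := Ht1.
have Hqd : q = (s.+1 + d)%N by rewrite /d; lia.
have He' : (e' + q = t * s.+1)%N.
  rewrite /e' subnK // (leq_trans Hqt) // leq_pmulr //.
have Htu : t = (u.+1 + d)%N by rewrite /u; lia.
rewrite (@Sg_ext _ (fun a => (a ^+ u.+1 / g a ^+ q + a ^+ u / g a ^+ q) + (a ^+ e' / g a ^+ q) ^+ t)).
  have k1 : (t * 2 <= t * q)%N by rewrite leq_mul2l Hq1 orbT.
  have k2 : (t * s.+1 <= t * q)%N by rewrite leq_mul2l ltnW ?orbT // (leq_ltn_trans Hs) // ltn_predL ltnW.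
  have h1 : (u.+1 < t * q)%N by rewrite /u; lia.
  have h2 : (u < t * q)%N by rewrite /u; lia.
  have h3 : (e' < t * q)%N by rewrite /e'; lia.
  rewrite !Sg_add T_frob (T0 h1) (T0 h2) (T0 h3) !addr0 expr0n gtn_eqF ?add0r //.
move=> a a0 g0; rewrite (F1 a0 g0 He' Hqd); clearbody u d e'.
have Hg : g a = a ^+ u * a * a ^+ d + a ^+ u * a ^+ d + 1.
  by rewrite gE (_ : t.-1 = u + d)%N ?Htu // exprS exprD; ring.
have -> : q.-1 = (s + d)%N by rewrite Hqd.
rewrite Hqd exprMn !exprD !exprS.
move: (g a) g0 Hg => z z0 Hz.
move: (expf_neq0 d a0) (expf_neq0 s a0) (expf_neq0 s z0) (expf_neq0 d z0) Hz.
move: (a ^+ u) (a ^+ d) (a ^+ s) (z ^+ s) (z ^+ d) => A D S Zs Zd D0 S0 Zs0 Zd0 Hz.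
have -> : a * A / (z * Zs * Zd) + A / (z * Zs * Zd) + (D * (z * Zs * Zd))^-1 =
   (D * (a * A + A) + 1) / (D * (z * Zs * Zd)).
  by field; rewrite ?D0 ?z0 ?Zs0 ?Zd0.
have -> : D * (a * A + A) + 1 = z by rewrite Hz; ring.
by field; rewrite ?D0 ?z0 ?Zs0 ?Zd0 ?S0.
Qed.


Lemma dir2 s : (s < t.+1 * q.-1)%N -> Sg (fun a => a ^+ s / (a * g a) ^+ q.-1) = 0.
Proof.
move=> Hs; have [/neg_case //|Hge] := ltnP s q.-1.
rewrite -(subnK Hge).
rewrite (@Sg_ext _ (fun a => a ^+ (s - q.-1) / g a ^+ q.-1)); last first.
  move=> a a0 g0; rewrite exprD exprMn; field.
  by rewrite !expf_neq0.
rewrite H4 //; move: Hs; rewrite mulSn; lia.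
Qed.

End Main.

Lemma dir1 (K L : finFieldType) (f : {rmorphism K -> L}) (q t : nat) n (alpha : 'I_n -> L) c
  (Hq1 : (1 < q)%N)
  (Hnz : forall k, alpha k != 0) (HG : forall k, (G4 L t).[alpha k] != 0) :
  (forall s, (s < t.+1 * q.-1)%N -> Sg f alpha c (fun a => a ^+ s / (a * (G4 L t).[a]) ^+ q.-1) = 0) ->
  forall s, (s < t * q.-1)%N -> Sg f alpha c (fun a => a ^+ s / (G4 L t).[a] ^+ q.-1) = 0.
Proof.
move=> H s Hs.
rewrite -(H (s + q.-1)%N); last by move: Hs; rewrite mulSn; lia.
apply: eq_bigr => k _; have a0 := Hnz k; have g0 := HG k.
congr (_ * _); rewrite exprD exprMn; field.
by rewrite !expf_neq0.
Qed.

Lemma goppaP (K L : finFieldType) (f : {rmorphism K -> L}) n (alpha : 'I_n -> L) (P : {poly L}) (c : 'rV[K]_n) :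
  reflect (forall s, (s < (size P).-1)%N ->
    \sum_(k < n) f (c 0 k) * alpha k ^+ s / P.[alpha k] = 0) (c \in goppa f alpha P).
Proof.
rewrite inE; apply: (iffP forallP) => H s.
- by move=> Hs; exact: eqP (H (Ordinal Hs)).
- by apply/eqP; apply: H.
Qed.

Theorem lemma7 (K L : finFieldType) (f : {rmorphism K -> L}) (q l t : nat)
  (Hq : exists p k : nat, [/\ prime p, (0 < k)%N & q = p ^ k]%N)
  (HK : #|K| = q) (Hl : (1 <= l)%N) (Ht : t = (q ^ l)%N) (HL : #|L| = (t ^ 2)%N)
  (n : nat) (alpha : 'I_n -> L) (Hinj : injective alpha)
  (Hsupp : forall a : L, a \in L4star L t <-> exists k : 'I_n, alpha k = a) :
  goppa f alpha (G5 L t ^+ q.-1) = goppa f alpha (G4 L t ^+ q.-1).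
Proof.
have [p [k [pp k0 Hqpk]]] := Hq.
have pK : p \in [pchar K] by apply: (card_finPcharP (n := k)); rewrite ?HK.
have pL : p \in [pchar L] by rewrite (fmorph_pchar f).
have Hqn : [pchar L].-nat q by rewrite (eq_pnat _ (pcharf_eq pL)) Hqpk pnatX pnat_id.
have Htn : [pchar L].-nat t by rewrite Ht pnatX Hqn.
have HL' : #|L| = (t * t)%N by rewrite HL mulnn.
have Hq1 : (1 < q)%N by rewrite Hqpk -(expn0 p) ltn_exp2l ?prime_gt1.
have Hsup : forall k, alpha k \in L4star L t by move=> j; apply/Hsupp; exists j.
have Hnz : forall k, alpha k != 0 by move=> j; have := Hsup j; rewrite inE => /andP[].
have HG : forall k, (G4 L t).[alpha k] != 0 by move=> j; have := Hsup j; rewrite inE => /andP[].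
have Ht1 : (0 < t)%N by rewrite Ht expn_gt0 ltnW.
have sG4 : size (G4 L t) = t.+1 by rewrite sizeG.
have sG5 : size (G5 L t) = t.+2.
  rewrite /G5 size_polyDl size_polyDl ?size_polyXn ?size_polyX //.
have E5 : forall (c : 'rV[K]_n) s, \sum_(k < n) f (c 0 k) * alpha k ^+ s / (G5 L t ^+ q.-1).[alpha k] =
    Sg f alpha c (fun a => a ^+ s / (a * (G4 L t).[a]) ^+ q.-1).
  by move=> c s; apply: eq_bigr => j _; rewrite horner_exp (G5E Ht Hq1) mulrA.
have E4 : forall (c : 'rV[K]_n) s, \sum_(k < n) f (c 0 k) * alpha k ^+ s / (G4 L t ^+ q.-1).[alpha k] =
    Sg f alpha c (fun a => a ^+ s / (G4 L t).[a] ^+ q.-1).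
  by move=> c s; apply: eq_bigr => j _; rewrite horner_exp mulrA.
apply/setP => c; apply/goppaP/goppaP; rewrite !size_exp ?sG4 ?sG5 /= => H s Hs.
- rewrite E4; apply: (dir1 Hq1 Hnz HG) => // s' Hs'; rewrite -E5; exact: H.
- rewrite E5; apply: (dir2 HK HL' Hqn Htn Ht Hl Hq1 Hnz HG) => // s' Hs'.
  rewrite -E4; exact: H.
Qed.
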